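(* Let $\mathbb{X},\mathbb{Y}$ be two-dimensional smooth real Banach spaces, with $\mathbb{Y}$ in addition strictly convex. Let $T\in\mathbb{L}(\mathbb{X},\mathbb{Y})$ be of rank one with $\|T\|=1$. If $(x,Tx)$ is not a CPP for some $x\in M_T$, then $T$ is an extreme contraction.
   Context: $M_T=\{x\in S_{\mathbb{X}}:\|Tx\|=\|T\|\}$. A norm one $T$ is an extreme contraction if it is an extreme point of the closed unit ball of $\mathbb{L}(\mathbb{X},\mathbb{Y})$. $B(x,r)=\{u:\|u-x\|<r\}$. $x\perp_B y$ means $\|x+\lambda y\|\ge\|x\|$ for all real $\lambda$; $x^\perp=\{y:x\perp_By\}$. For $x\in S_{\mathbb{X}}$, $y\in S_{\mathbb{Y}}$, $(x,y)$ is a CPP if there exist $r>0,\mu>0$ such that for all $z\in x^\perp\cap S_{\mathbb{X}}$, all $w\in y^\perp\cap S_{\mathbb{Y}}$ and all $a,b\in\mathbb{R}$, $ax+bz\in B(x,r)\cap S_{\mathbb{X}}$ implies $\|ay+b\mu w\|\le1$. *)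

(* Defs.v *)
From HB Require Import structures.
From mathcomp Require Import all_boot all_order all_algebra.
From mathcomp Require Import classical_sets reals.
Set Implicit Arguments. Unset Strict Implicit. Unset Printing Implicit Defensive.
Import Order.TTheory GRing.Theory Num.Theory.
Local Open Scope ring_scope.
Local Open Scope classical_set_scope.

(* A two-dimensional real normed space is modelled (up to linear isometry) as
   R^2 = 'rV[R]_2 equipped with an arbitrary norm N.  Finite-dimensional, hence
   automatically Banach. Operators X -> Y are 2x2 matrices acting on row
   vectors: T x := x *m T. *)
Section Defs.
Variable R : realType.
Notation V := 'rV[R]_2.

Definition is_norm (N : V -> R) : Prop :=
  [/\ forall x, 0 <= N x,
      forall x, N x = 0 -> x = 0,
      forall (a : R) x, N (a *: x) = `|a| * N x
    & forall x y, N (x + y) <= N x + N y].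

(* linear functionals on R^2, represented by a row vector f *)
Definition app (f y : V) : R := \sum_(i < 2) f 0 i * y 0 i.

Definition supporting (N : V -> R) (f x : V) : Prop :=
  app f x = 1 /\ forall y, `|app f y| <= N y.

Definition smooth (N : V -> R) : Prop :=
  forall x, N x = 1 -> forall f g, supporting N f x -> supporting N g x -> f = g.

Definition strictly_convex (N : V -> R) : Prop :=
  forall x y, N x = 1 -> N y = 1 -> x != y -> N ((2^-1 : R) *: (x + y)) < 1.

Definition opnorm (NX NY : V -> R) (T : 'M[R]_2) : R :=
  sup [set NY (x *m T) | x in [set x : V | NX x <= 1]].

Definition normAttain (NX NY : V -> R) (T : 'M[R]_2) (x : V) : Prop :=
  NX x = 1 /\ NY (x *m T) = opnorm NX NY T.

Definition birkhoff (N : V -> R) (x y : V) : Prop :=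
  forall l : R, N x <= N (x + l *: y).

Definition CPP (NX NY : V -> R) (x y : V) : Prop :=
  exists r : R, exists mu : R, 0 < r /\ 0 < mu /\
    forall (z w : V) (a b : R),
      birkhoff NX x z -> NX z = 1 ->
      birkhoff NY y w -> NY w = 1 ->
      NX (a *: x + b *: z - x) < r -> NX (a *: x + b *: z) = 1 ->
      NY (a *: y + (b * mu) *: w) <= 1.

Definition extreme_contraction (NX NY : V -> R) (T : 'M[R]_2) : Prop :=
  opnorm NX NY T <= 1 /\
  forall (S1 S2 : 'M[R]_2) (t : R),
    opnorm NX NY S1 <= 1 -> opnorm NX NY S2 <= 1 -> 0 < t < 1 ->
    T = t *: S1 + (1 - t) *: S2 -> S1 = T /\ S2 = T.
End Defs.

(* Main.v *)
Require Import Defs.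
From HB Require Import structures.
From mathcomp Require Import all_boot all_order all_algebra.
From mathcomp Require Import classical_sets reals.
From mathcomp Require Import ring lra.
Import Order.TTheory GRing.Theory Num.Theory.
Local Open Scope ring_scope.
Local Open Scope classical_set_scope.
Set Implicit Arguments. Unset Strict Implicit. Unset Printing Implicit Defensive.

Section Aux.
Variable R : realType.
Local Notation V := 'rV[R]_2.

Definition vec (a b : R) : V := \row_(i < 2) [:: a; b]`_i.
Lemma vec00 a b : vec a b 0 0 = a. Proof. by rewrite mxE. Qed.
Lemma vec01 a b : vec a b 0 1 = b. Proof. by rewrite mxE. Qed.

Lemma vec_eq (u v : V) : u 0 0 = v 0 0 -> u 0 1 = v 0 1 -> u = v.
Proof.
move=> h0 h1; apply/rowP => i.
have [->|->] : i = 0 \/ i = 1.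
  case: i => [[|[|k]] Hi]; [left|right|by []]; exact: val_inj.
by []. by [].
Qed.

Lemma appE (f y : V) : app f y = f 0 0 * y 0 0 + f 0 1 * y 0 1.
Proof. rewrite /app big_ord_recr big_ord_recr big_ord0 /= add0r.
by congr (f 0 _ * y 0 _ + f 0 _ * y 0 _); apply: val_inj. Qed.

Definition det (x z : V) := x 0 0 * z 0 1 - x 0 1 * z 0 0.
Definition cA (x z u : V) := (u 0 0 * z 0 1 - u 0 1 * z 0 0) / det x z.
Definition cB (x z u : V) := (x 0 0 * u 0 1 - x 0 1 * u 0 0) / det x z.
Definition lin (x z : V) (p q : R) : V :=
  vec ((p * z 0 1 - q * x 0 1) / det x z) ((q * x 0 0 - p * z 0 0) / det x z).

Lemma decomp (x z u : V) : det x z != 0 -> u = cA x z u *: x + cB x z u *: z.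
Proof.
move=> d; apply: vec_eq; rewrite !mxE /cA /cB; move: d; rewrite /det => d; field; done.
Qed.

Lemma app_lin (x z u : V) p q : det x z != 0 ->
  app (lin x z p q) u = p * cA x z u + q * cB x z u.
Proof.
move=> d; rewrite appE /lin !vec00 !vec01 /cA /cB; move: d; rewrite /det => d; field; done.
Qed.

Lemma cA_lin x z a b : det x z != 0 -> cA x z (a *: x + b *: z) = a.
Proof. move=> d; rewrite /cA !mxE; move: d; rewrite /det => d; field; done. Qed.
Lemma cB_lin x z a b : det x z != 0 -> cB x z (a *: x + b *: z) = b.
Proof. move=> d; rewrite /cB !mxE; move: d; rewrite /det => d; field; done. Qed.

Lemma cA_x (x z : V) : det x z != 0 -> cA x z x = 1.
Proof. rewrite /cA /det => d; field; done. Qed.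
Lemma cB_x (x z : V) : det x z != 0 -> cB x z x = 0.
Proof. rewrite /cB /det => d; field; done. Qed.
Lemma cA_z (x z : V) : det x z != 0 -> cA x z z = 0.
Proof. rewrite /cA /det => d; field; done. Qed.
Lemma cB_z (x z : V) : det x z != 0 -> cB x z z = 1.
Proof. rewrite /cB /det => d; field; done. Qed.

Lemma app_add (f u v : V) : app f (u + v) = app f u + app f v.
Proof. rewrite !appE !mxE; ring. Qed.
Lemma app_scale (f : V) a (u : V) : app f (a *: u) = a * app f u.
Proof. rewrite !appE !mxE; ring. Qed.


Section Norm.
Variable N : V -> R.
Hypothesis hN : is_norm N.

Lemma n_ge0 u : 0 <= N u. Proof. by case: hN. Qed.
Lemma n_scale a u : N (a *: u) = `|a| * N u. Proof. by case: hN. Qed.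
Lemma n_tri u v : N (u + v) <= N u + N v. Proof. by case: hN. Qed.
Lemma n_eq0 u : N u = 0 -> u = 0. Proof. by case: hN => _ h _ _; apply: h. Qed.
Lemma n0 : N 0 = 0.
Proof. by rewrite -(scale0r (0 : V)) n_scale normr0 mul0r. Qed.
Lemma nN u : N (- u) = N u.
Proof. by rewrite -scaleN1r n_scale normrN normr1 mul1r. Qed.
Lemma n_gt0 u : u != 0 -> 0 < N u.
Proof.
move=> hu; rewrite lt_neqAle n_ge0 andbT; apply/eqP => h.
by move: hu; rewrite (n_eq0 (esym h)) eqxx.
Qed.
Lemma n_sub u v : N u - N v <= N (u - v).
Proof.
have := n_tri (u - v) v; rewrite subrK => h; lra.
Qed.

Lemma hb_step (v e : V) : det v e != 0 ->
  exists f : V, app f v = N v /\ forall u, `|app f u| <= N u.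
Proof.
move=> d.
pose A := [set r : R | exists s : R, r = - N (s *: v + e) - s * N v].
have key : forall s t, - N (s *: v + e) - s * N v <= N (t *: v + e) - t * N v.
  move=> s t.
  have h1 : (t - s) * N v <= N (t *: v + e) + N (s *: v + e).
    have -> : (t - s) * N v = N ((t *: v + e) - (s *: v + e)) - `|t - s| * N v + (t - s) * N v.
      have -> : (t *: v + e) - (s *: v + e) = (t - s) *: v.
        by rewrite scalerBl opprD addrACA subrr addr0.
      rewrite n_scale; ring.
    have h2 := n_tri (t *: v + e) (- (s *: v + e)); rewrite nN in h2.
    have h3 : (t - s) * N v <= `|t - s| * N v.
      by apply: ler_wpM2r; [exact: n_ge0| exact: ler_norm].
    lra.
  lra.
have hA0 : A !=set0 by exists (- N (0 *: v + e) - 0 * N v); exists 0.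
have hAub : has_ubound A.
  exists (N (0 *: v + e) - 0 * N v) => r [s ->]; exact: key.
pose k := sup A.
have klo : forall t, - N (t *: v + e) - t * N v <= k.
  move=> t; apply: (ub_le_sup hAub); by exists t.
have khi : forall t, k <= N (t *: v + e) - t * N v.
  move=> t; apply: ge_sup => // r [s ->]; exact: key.
exists (lin v e (N v) k); split.
  by rewrite app_lin // cA_x // cB_x // mulr1 mulr0 addr0.
move=> u; rewrite app_lin //.
set a := cA v e u; set b := cB v e u.
have -> : u = a *: v + b *: e by exact: decomp.
have [b0|bn0] := eqVneq b 0.
  rewrite b0 scale0r addr0 mulr0 addr0 n_scale normrM (ger0_norm (n_ge0 v)) mulrC.
  done.
have -> : a *: v + b *: e = b *: ((a / b) *: v + e).
  by rewrite scalerDr scalerA mulrCA divff // mulr1.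
rewrite n_scale.
have -> : N v * a + k * b = b * ((a / b) * N v + k).
  by field.
rewrite normrM ler_wpM2l //.
have := klo (a / b); have := khi (a / b).
set q := N _; move=> h1 h2.
rewrite ler_norml; apply/andP; split; lra.
Qed.


Lemma hb (v : V) : v != 0 ->
  exists f : V, app f v = N v /\ forall u, `|app f u| <= N u.
Proof.
move=> hv.
have [h1|h1] := eqVneq (v 0 1) 0.
  apply: (@hb_step v (vec 0 1)); rewrite /det !vec00 !vec01 h1 mulr1 mul0r subr0.
  apply/eqP => h0; move/eqP: hv; apply; apply: vec_eq; by rewrite ?h0 ?h1 mxE.
apply: (@hb_step v (vec 1 0)); rewrite /det !vec00 !vec01 mulr0 mulr1 sub0r oppr_eq0 //.
Qed.

Lemma lower_bound : exists K : R, forall u : V, `|u 0 0| + `|u 0 1| <= K * N u.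
Proof.
have v0 : vec 1 0 != 0 :> V.
  apply/eqP => h; have := congr1 (fun w : V => w 0 0) h; rewrite vec00 mxE => /eqP.
  by rewrite oner_eq0.
have [g [g1 g2]] := hb v0.
have gv : g 0 0 = N (vec 1 0) by rewrite -g1 appE !vec00 !vec01; ring.
have gpos : 0 < g 0 0 by rewrite gv; exact: n_gt0.
pose w : V := vec (- g 0 1) (g 0 0).
have w0 : w != 0.
  apply/eqP => h; have := congr1 (fun w : V => w 0 1) h; rewrite vec01 mxE => h'.
  by move: gpos; rewrite h' ltxx.
have [h [h1 h2]] := hb w0.
pose D := g 0 0 * h 0 1 - g 0 1 * h 0 0.
have hD : D = N w by rewrite -h1 appE /D /w !vec00 !vec01; ring.
have Dpos : 0 < D by rewrite hD; exact: n_gt0.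
exists ((`|h 0 1| + `|g 0 1| + `|g 0 0| + `|h 0 0|) / D) => u.
have e0 : u 0 0 * D = h 0 1 * app g u - g 0 1 * app h u by rewrite !appE /D; ring.
have e1 : u 0 1 * D = g 0 0 * app h u - h 0 0 * app g u by rewrite !appE /D; ring.
have b0 : `|u 0 0| * D <= (`|h 0 1| + `|g 0 1|) * N u.
  rewrite -(gtr0_norm Dpos) -normrM e0.
  apply: (le_trans (ler_normB _ _)); rewrite !normrM mulrDl.
  apply: lerD; apply: ler_wpM2l => //.
have b1 : `|u 0 1| * D <= (`|g 0 0| + `|h 0 0|) * N u.
  rewrite -(gtr0_norm Dpos) -normrM e1.
  apply: (le_trans (ler_normB _ _)); rewrite !normrM mulrDl.
  apply: lerD; apply: ler_wpM2l => //.
rewrite mulrAC ler_pdivlMr //; rewrite mulrDl; lra.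
Qed.

End Norm.

Lemma op_bound (NX NY : V -> R) (S : 'M[R]_2) : is_norm NX -> is_norm NY ->
  exists C, forall u, NY (u *m S) <= C * NX u.
Proof.
move=> hX hY.
have [K hK] := lower_bound hX.
pose M := NY (row 0 S) + NY (row 1 S).
exists (K * M) => u.
have -> : u *m S = u 0 0 *: row 0 S + u 0 1 *: row 1 S.
  apply: vec_eq; rewrite !mxE !big_ord_recr big_ord0 /= add0r;
  by congr (u 0 _ * S _ _ + u 0 _ * S _ _); apply: val_inj.
apply: (le_trans (n_tri hY _ _)); rewrite !(n_scale hY).
have hM0 : 0 <= NY (row 0 S) := n_ge0 hY _.
have hM1 : 0 <= NY (row 1 S) := n_ge0 hY _.
have := hK u.
have : `|u 0 0| * NY (row 0 S) <= (`|u 0 0| + `|u 0 1|) * NY (row 0 S).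
  by apply: ler_wpM2r => //; rewrite lerDl.
have : `|u 0 1| * NY (row 1 S) <= (`|u 0 0| + `|u 0 1|) * NY (row 1 S).
  by apply: ler_wpM2r => //; rewrite lerDr.
have : (`|u 0 0| + `|u 0 1|) * M <= K * NX u * M.
  move=> *; apply: ler_wpM2r; [rewrite /M; lra | exact: hK].
rewrite /M; nra.
Qed.

Lemma opnorm_le (NX NY : V -> R) (S : 'M[R]_2) : is_norm NX -> is_norm NY ->
  forall u, NY (u *m S) <= opnorm NX NY S * NX u.
Proof.
move=> hX hY.
have [C hC] := op_bound S hX hY.
have hub : has_ubound [set NY (x *m S) | x in [set x : V | NX x <= 1]].
  exists `|C| => r [x hx <-]; apply: (le_trans (hC x)).
  apply: (le_trans (ler_norm _)); rewrite normrM (ger0_norm (n_ge0 hX x)).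
  rewrite -[leRHS]mulr1; apply: ler_wpM2l => //.
have hmem : forall x, NX x <= 1 -> NY (x *m S) <= opnorm NX NY S.
  move=> x hx; apply: (ub_le_sup hub); by exists x.
move=> u.
have [->|hu] := eqVneq u 0.
  by rewrite mul0mx (n0 hY) (n0 hX) mulr0.
have np := n_gt0 hX hu.
have := hmem ((NX u)^-1 *: u).
rewrite (n_scale hX) -scalemxAl (n_scale hY) ger0_norm ?invr_ge0 ?(ltW np) //.
rewrite mulVf ?gt_eqF // lexx => /(_ isT).
by rewrite ler_pdivrMl // mulrC.
Qed.


Lemma cA_add (x z p q : V) : cA x z (p + q) = cA x z p + cA x z q.
Proof. rewrite /cA !mxE; rewrite !mulrDl; ring. Qed.
Lemma cA_scale (x z p : V) s : cA x z (s *: p) = s * cA x z p.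
Proof. rewrite /cA !mxE; ring. Qed.
Lemma cB_add (x z p q : V) : cB x z (p + q) = cB x z p + cB x z q.
Proof. rewrite /cB !mxE; rewrite !mulrDl; ring. Qed.
Lemma cB_scale (x z p : V) s : cB x z (s *: p) = s * cB x z p.
Proof. rewrite /cB !mxE; ring. Qed.

Lemma cA0 (x z : V) : cA x z 0 = 0.
Proof. by rewrite -(scale0r (0:V)) cA_scale mul0r. Qed.
Lemma cB0 (x z : V) : cB x z 0 = 0.
Proof. by rewrite -(scale0r (0:V)) cB_scale mul0r. Qed.

Section Norm2.
Variable N : V -> R.
Hypothesis hN : is_norm N.

Lemma birk_det (v e : V) : birkhoff N v e -> N v = 1 -> N e = 1 -> det v e != 0.
Proof.
move=> hb nv ne; apply/negP => /eqP d.
have v0 : v != 0 by apply/eqP => h; move: nv; rewrite h (n0 hN) => /eqP; rewrite eq_sym oner_eq0.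
have [k hk] : exists k, e = k *: v.
  have [h0|h0] := eqVneq (v 0 0) 0.
    have h1 : v 0 1 != 0.
      apply/eqP => h1; move/eqP: v0; apply; apply: vec_eq; by rewrite ?h0 ?h1 mxE.
    exists (e 0 1 / v 0 1); apply: vec_eq; rewrite !mxE.
      move: d; rewrite /det h0 mul0r sub0r => /eqP; rewrite oppr_eq0 mulf_eq0 (negbTE h1) /= => /eqP ->.
      by rewrite mulr0.
    by field.
  exists (e 0 0 / v 0 0); apply: vec_eq; rewrite !mxE.
    by field.
  move: d; rewrite /det => d.
  have -> : e 0 1 = (v 0 1 * e 0 0) / v 0 0.
    by apply: (mulIf h0); rewrite mulfVK //; rewrite mulrC -[LHS]subr0 -d; ring.
  by field.
have k0 : k != 0 by apply/eqP => h; move: ne; rewrite hk h scale0r (n0 hN) => /eqP; rewrite eq_sym oner_eq0.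
have := hb (- k^-1); rewrite hk scalerA mulNr mulVf // scaleN1r subrr (n0 hN) nv.
by rewrite ler10.
Qed.

Lemma birk_func (v e : V) : birkhoff N v e -> N v = 1 -> det v e != 0 ->
  forall u, `|cA v e u| <= N u.
Proof.
move=> hb nv d u.
rewrite {2}(decomp u d).
set a := cA v e u; set b := cB v e u.
have [->|a0] := eqVneq a 0; first by rewrite normr0 n_ge0.
have -> : a *: v + b *: e = a *: (v + (b / a) *: e).
  by rewrite scalerDr scalerA mulrCA divff // mulr1.
rewrite (n_scale hN) -[leLHS]mulr1 ler_wpM2l // -nv; exact: hb.
Qed.

Lemma convex1 (p q : V) th : N p <= 1 -> N q <= 1 -> 0 <= th <= 1 ->
  N ((1 - th) *: p + th *: q) <= 1.
Proof.
move=> hp hq /andP [t0 t1].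
apply: (le_trans (n_tri hN _ _)); rewrite !(n_scale hN).
rewrite (ger0_norm t0) ger0_norm ?subr_ge0 //.
have : (1 - th) * N p <= (1 - th) by rewrite -[leRHS]mulr1 ler_wpM2l ?subr_ge0.
have : th * N q <= th by rewrite -[leRHS]mulr1 ler_wpM2l.
lra.
Qed.

Hypothesis sc : strictly_convex N.

Lemma strict_gen (p q : V) t : N p <= 1 -> N q <= 1 -> 0 < t < 1 ->
  N (t *: p + (1 - t) *: q) = 1 -> p = q.
Proof.
move=> hp hq /andP [t0 t1] h.
apply/eqP; apply/negPn/negP => pq.
have ht := n_tri hN (t *: p) ((1 - t) *: q).
have t1p : 0 < 1 - t by rewrite subr_gt0.
rewrite h !(n_scale hN) (gtr0_norm t0) (gtr0_norm t1p) in ht.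
have np : N p = 1.
  apply/eqP; rewrite eq_le hp /=.
  have : (1 - t) * N q <= (1 - t) by rewrite -[leRHS]mulr1 ler_wpM2l // subr_ge0 ltW.
  nra.
have nq : N q = 1.
  apply/eqP; rewrite eq_le hq /=.
  have : t * N p <= t by rewrite -[leRHS]mulr1 ler_wpM2l // ltW.
  nra.
have hm := sc np nq pq.
set mid := (2^-1 : R) *: (p + q) in hm.
have [tle|tlt] := lerP (2^-1) t.
  have He : t *: p + (1 - t) *: q = (2 * t - 1) *: p + (1 - (2 * t - 1)) *: mid.
    apply: vec_eq; rewrite !mxE; field => //.
  move: h; rewrite He => h.
  have := n_tri hN ((2 * t - 1) *: p) ((1 - (2 * t - 1)) *: mid).
  have a1 : 0 <= 2 * t - 1 by lra.
  have a2 : 0 <= 1 - (2 * t - 1) by lra.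
  rewrite h (n_scale hN (2 * t - 1)) (n_scale hN (1 - (2 * t - 1))) np (ger0_norm a1) (ger0_norm a2).
  have : (1 - (2 * t - 1)) * N mid < (1 - (2 * t - 1)).
    by rewrite -[ltRHS]mulr1 ltr_pM2l //; lra.
  lra.
have He : t *: p + (1 - t) *: q = (1 - 2 * t) *: q + (1 - (1 - 2 * t)) *: mid.
  apply: vec_eq; rewrite !mxE; field => //.
move: h; rewrite He => h.
have := n_tri hN ((1 - 2 * t) *: q) ((1 - (1 - 2 * t)) *: mid).
have a1 : 0 <= 1 - 2 * t by lra.
have a2 : 0 <= 1 - (1 - 2 * t) by lra.
rewrite h (n_scale hN (1 - 2 * t)) (n_scale hN (1 - (1 - 2 * t))) nq (ger0_norm a1) (ger0_norm a2).
have : (1 - (1 - 2 * t)) * N mid < (1 - (1 - 2 * t)).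
  by rewrite -[ltRHS]mulr1 ltr_pM2l //; lra.
lra.
Qed.

End Norm2.
End Aux.

Local Close Scope classical_set_scope.
Unset Implicit Arguments.

Theorem mainTheorem5 (R : realType) (NX NY : 'rV[R]_2 -> R) :
  is_norm NX -> is_norm NY -> smooth NX -> smooth NY -> strictly_convex NY ->
  forall T : 'M[R]_2,
    \rank T = 1%N -> opnorm NX NY T = 1 ->
    (exists x, normAttain NX NY T x /\ ~ CPP NX NY x (x *m T)) ->
    extreme_contraction NX NY T.
Proof.
move=> hX hY smX _ scY T rk nT [x [[nx1 nxT] nCPP]].
set y := x *m T in nCPP nxT.
have ny : NY y = 1 by rewrite nxT.
have y0 : y != 0.
  by apply/eqP => h; move: ny; rewrite h (n0 hY) => /eqP; rewrite eq_sym oner_eq0.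
have [D hD] : exists D : 'M[R]_(2,1), T = D *m y.
  have yT : (y <= T)%MS by rewrite /y submxMl.
  have [_] := mxrank_leqif_eq yT.
  rewrite rank_rV y0 rk eqxx => /esym /andP [_ /submxP [D hD]].
  by exists D.
pose f : 'rV[R]_2 := D^T.
have hT : forall u, u *m T = app f u *: y.
  move=> u; rewrite hD mulmxA [u *m D]mx11_scalar mul_scalar_mx; congr (_ *: _).
  rewrite appE !mxE !big_ord_recr big_ord0 /= add0r.
  by congr (_ + _); rewrite mulrC; congr (D _ _ * u 0 _); apply: val_inj.
have hphi : forall u, `|app f u| <= NX u.
  move=> u; have := opnorm_le T hX hY u.
  by rewrite hT (n_scale hY) ny mulr1 nT mul1r.
have fx : app f x = 1.
  have : (app f x - 1) *: y = 0 by rewrite scalerBl scale1r -hT subrr.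
  by move/eqP; rewrite scaler_eq0 (negbTE y0) orbF subr_eq0 => /eqP.
pose z1 : 'rV[R]_2 := vec (- f 0 1) (f 0 0).
have fz1 : app f z1 = 0 by rewrite appE vec00 vec01; ring.
have z1ne : z1 != 0.
  apply/eqP => h; move: fx.
  have h0 := congr1 (fun w : 'rV[R]_2 => w 0 0) h.
  have h1 := congr1 (fun w : 'rV[R]_2 => w 0 1) h.
  rewrite /= vec00 mxE in h0; rewrite /= vec01 mxE in h1.
  have h0' : D 1 0 = 0 by rewrite -[D 1 0]opprK h0 !mxE oppr0.
  rewrite appE /f !mxE h0' h1 !mxE !mul0r addr0 => /eqP; rewrite eq_sym oner_eq0.
  done.
pose z0 := (NX z1)^-1 *: z1.
have nz1 := n_gt0 hX z1ne.
have nz0 : NX z0 = 1.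
  by rewrite /z0 (n_scale hX) ger0_norm ?invr_ge0 ?(ltW nz1) // mulVf ?gt_eqF.
have fz0 : app f z0 = 0 by rewrite /z0 app_scale fz1 mulr0.
have bxz0 : birkhoff NX x z0.
  move=> l; rewrite nx1; have := hphi (x + l *: z0).
  by rewrite app_add app_scale fz0 mulr0 addr0 fx normr1.
have dxz0 : det x z0 != 0 := birk_det hX bxz0 nx1 nz0.
clearbody z0.
split; first by rewrite nT.
move=> S1 S2 t n1 n2 /andP [t0 t1] hTS.
have t1p : 0 < 1 - t by rewrite subr_gt0.
suff S1T : S1 = T.
  split=> //; rewrite S1T in hTS.
  have e : (1 - t) *: S2 = (1 - t) *: T.
    by rewrite [RHS]scalerBl scale1r {1}hTS addrAC subrr add0r.
  have := congr1 (fun M => (1 - t)^-1 *: M) e.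
  by rewrite /= !scalerA mulVf ?gt_eqF // !scale1r.
apply/eqP; apply/negPn/negP => hne.
apply: nCPP.
have hx1 : NY (x *m S1) <= 1.
  by have := opnorm_le S1 hX hY x; rewrite nx1 mulr1 => h; exact: le_trans h n1.
have hx2 : NY (x *m S2) <= 1.
  by have := opnorm_le S2 hX hY x; rewrite nx1 mulr1 => h; exact: le_trans h n2.
have ex : x *m S1 = x *m S2.
  apply: (strict_gen hY scY hx1 hx2 (t:=t)); first by rewrite t0 t1.
  by rewrite !scalemxAr -mulmxDr -hTS.
have xS1 : x *m S1 = y.
  by rewrite /y hTS mulmxDr -!scalemxAr -ex -scalerDl addrCA subrr addr0 scale1r.
have xS2 : x *m S2 = y by rewrite -ex.
pose c1 := z0 *m S1.
pose c2 := z0 *m S2.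
have hc1 : z0 *m S1 = c1 by [].
have hc2 : z0 *m S2 = c2 by [].
clearbody c1 c2.
have hc : t *: c1 + (1 - t) *: c2 = 0.
  by rewrite -hc1 -hc2 !scalemxAr -mulmxDr -hTS hT fz0 scale0r.
have c1ne : c1 != 0.
  apply/eqP => c10; move/negP: hne; apply; apply/eqP.
  apply/row_matrixP => i; rewrite !rowE.
  set u := delta_mx 0 i.
  rewrite (decomp u dxz0) !mulmxDl -!scalemxAl xS1 hc1 c10 (hT z0) fz0 scale0r.
  done.
pose m := t * (1 - t).
have m0 : 0 < m by rewrite /m mulr_gt0.
have m1 : m <= 1 by rewrite /m; nra.
have ec2 : c2 = (- t / (1 - t)) *: c1.
  have h0 := congr1 (fun v : 'rV[R]_2 => v 0 0) hc.
  have h1 := congr1 (fun v : 'rV[R]_2 => v 0 1) hc.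
  rewrite /= !mxE in h0 h1.
  apply: vec_eq; rewrite !mxE.
    have -> : c2 0 0 = ((1 - t) * c2 0 0) / (1 - t) by field; rewrite gt_eqF.
    have -> : (1 - t) * c2 0 0 = - (t * c1 0 0) by lra.
    by field; rewrite gt_eqF.
  have -> : c2 0 1 = ((1 - t) * c2 0 1) / (1 - t) by field; rewrite gt_eqF.
  have -> : (1 - t) * c2 0 1 = - (t * c1 0 1) by lra.
  by field; rewrite gt_eqF.
have L : forall a b, NX (a *: x + b *: z0) = 1 ->
    NY (a *: y + (m * b) *: c1) <= 1 /\ NY (a *: y - (m * b) *: c1) <= 1.
  move=> a b hu.
  have hS1 := opnorm_le S1 hX hY (a *: x + b *: z0).
  rewrite hu mulr1 mulmxDl -!scalemxAl xS1 hc1 in hS1.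
  have hS2 := opnorm_le S2 hX hY (a *: x + b *: z0).
  rewrite hu mulr1 mulmxDl -!scalemxAl xS2 hc2 in hS2.
  have p1 : NY (a *: y + b *: c1) <= 1 := le_trans hS1 n1.
  have p2 : NY (a *: y + b *: c2) <= 1 := le_trans hS2 n2.
  have hay : NY (a *: y) <= 1.
    have := hphi (a *: x + b *: z0).
    by rewrite app_add !app_scale fx fz0 hu mulr1 mulr0 addr0 (n_scale hY) ny mulr1.
  split.
    have -> : a *: y + (m * b) *: c1 = (1 - m) *: (a *: y) + m *: (a *: y + b *: c1).
      by apply: vec_eq; rewrite !mxE; ring.
    by apply: convex1 => //; rewrite (ltW m0) m1.
  have -> : a *: y - (m * b) *: c1 =
      (1 - (1 - t) ^+ 2) *: (a *: y) + (1 - t) ^+ 2 *: (a *: y + b *: c2).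
    by rewrite ec2; apply: vec_eq; rewrite !mxE /m; field; rewrite gt_eqF.
  apply: convex1 => //; apply/andP; split; first by rewrite exprn_ge0 // ltW.
  by rewrite expr2; nra.
have nc1 := n_gt0 hY c1ne.
exists 1, (m * NY c1); split; first exact: ltr01.
split; first exact: mulr_gt0.
move=> z w a b bxz nz byw nw _ nu.
have dxz := birk_det hX bxz nx1 nz.
have supg : supporting NX (lin x z 1 0) x.
  split; first by rewrite app_lin // cA_x // cB_x //; ring.
  by move=> u; rewrite app_lin // mul1r mul0r addr0; exact: birk_func.
have fg : f = lin x z 1 0 := smX x nx1 f _ (conj fx hphi) supg.
have fz : app f z = 0 by rewrite fg app_lin // cA_z // cB_z //; ring.
have ez := decomp z dxz0.
have A0 : cA x z0 z = 0.
  by move: fz; rewrite {1}ez app_add !app_scale fx fz0 mulr1 mulr0 addr0.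
rewrite A0 scale0r add0r in ez.
set k := cB x z0 z in ez.
have nk : `|k| = 1 by move: nz; rewrite ez (n_scale hX) nz0 mulr1.
have dyw := birk_det hY byw ny nw.
have al0 : cA y w c1 = 0.
  set al := cA y w c1.
  apply/eqP; apply/negPn/negP => an0.
  have corner : forall a' b', NX (a' *: x + b' *: z0) = 1 -> a' + m * `|al| * `|b'| <= 1.
    move=> a' b' h; have [l1 l2] := L a' b' h.
    have q1 := le_trans (birk_func hY byw ny dyw (a' *: y + (m * b') *: c1)) l1.
    have q2 := le_trans (birk_func hY byw ny dyw (a' *: y - (m * b') *: c1)) l2.
    rewrite cA_add !cA_scale cA_x // mulr1 in q1.
    rewrite -scaleNr cA_add !cA_scale cA_x // mulr1 in q2.
    rewrite -/al in q1 q2.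
    move: q1 q2; rewrite !ler_norml => /andP [_ q1] /andP [_ q2].
    rewrite -mulrA -normrM.
    have [hp|hn] := lerP 0 (al * b').
      by rewrite ger0_norm //; nra.
    by rewrite ltr0_norm //; nra.
  clearbody al.
  have bound : forall A B, A + m * `|al| * `|B| <= NX (A *: x + B *: z0).
    move=> A B.
    have [e0|ne0] := eqVneq (A *: x + B *: z0) 0.
      have cA' := cA_lin A B dxz0; have cB' := cB_lin A B dxz0.
      rewrite e0 cA0 in cA'; rewrite e0 cB0 in cB'.
      by rewrite -cA' -cB' normr0 mulr0 addr0 !scale0r addr0 (n0 hX).
    have np := n_gt0 hX ne0.
    set n := NX _ in np *.
    have := corner (A / n) (B / n).
    have -> : (A / n) *: x + (B / n) *: z0 = n^-1 *: (A *: x + B *: z0).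
      by rewrite scalerDr !scalerA ![n^-1 * _]mulrC.
    rewrite (n_scale hX) ger0_norm ?invr_ge0 ?(ltW np) // -/n mulVf ?gt_eqF //.
    move=> /(_ erefl).
    have -> : A / n + m * `|al| * `|B / n| = (A + m * `|al| * `|B|) / n.
      have ni : 0 <= n^-1 by rewrite invr_ge0 ltW.
      by rewrite normrM (ger0_norm ni); field; rewrite gt_eqF.
    by rewrite ler_pdivrMr // mul1r.
  have gsup : forall s, `|s| <= m * `|al| -> supporting NX (lin x z0 1 s) x.
    move=> s hs; split; first by rewrite app_lin // cA_x // cB_x //; ring.
    move=> u; rewrite app_lin //.
    set A := cA x z0 u; set B := cB x z0 u.
    have -> : NX u = NX (A *: x + B *: z0) by rewrite {1}(decomp u dxz0).
    have b1 := bound A B.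
    have b2 := bound (- A) (- B).
    rewrite !scaleNr -opprD (nN hX) normrN in b2.
    have hsB : `|s * B| <= m * `|al| * `|B|.
      by rewrite normrM ler_wpM2r.
    rewrite mul1r ler_norml; move: hsB; rewrite ler_norml => /andP [h1 h2].
    apply/andP; split; lra.
  have hma : `|m * al| <= m * `|al| by rewrite normrM (gtr0_norm m0).
  have hma' : `|- (m * al)| <= m * `|al| by rewrite normrN.
  have gg := smX x nx1 _ _ (gsup (m * al) hma) (gsup (- (m * al)) hma').
  have := congr1 (fun g => app g z0) gg.
  rewrite /= !app_lin // cA_z // cB_z // !mulr0 !mulr1 !add0r => hh.
  have : m * al = 0 by lra.
  by move/eqP; rewrite mulf_eq0 (gt_eqF m0) /= (negbTE an0).
have ec1 := decomp c1 dyw.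
rewrite al0 scale0r add0r in ec1.
set be := cB y w c1 in ec1.
have nb : NY c1 = `|be| by rewrite {1}ec1 (n_scale hY) nw mulr1.
clearbody be k.
rewrite ez scalerA in nu.
have [l1 l2] := L a (b * k) nu.
rewrite ec1 scalerA in l1; rewrite ec1 scalerA -scaleNr in l2.
have e1 : `|be| = `|k * be| by rewrite normrM nk mul1r.
rewrite nb e1.
have [hk|hk] := lerP 0 (k * be).
  by rewrite (ger0_norm hk); move: l1; congr (NY (_ + _ *: _) <= 1); ring.
by rewrite (ltr0_norm hk); move: l2; congr (NY (_ + _ *: _) <= 1); ring.
Qed.
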